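(* For every set $E\subset\mathbb R^+$, $$\mathrm{Dim}_\mathrm{H}E=\inf\Big\{\rho\ge0:\sum_{n\ge1}\widetilde\nu^n_\rho(E)<\infty\Big\},$$ where for $n\ge1$ and $\rho\ge0$, $$\widetilde\nu^n_\rho(E)=\inf\Big\{\sum_{i=1}^m\Big(\frac{|Q_i|}{2^n}\Big)^\rho: Q_i\subset\mathcal S_n \text{ intervals with integer endpoints},\ \frac{|Q_i|}{n^2}\in\mathbb N^*,\ E\cap\mathcal S_n\subset\bigcup_{i=1}^m Q_i\Big\}$$ (infimum over finite families).
   Context: $|Q|$ denotes the length of an interval $Q$, and $\mathbb N^*$ the positive integers. Let $\mathcal S_n=[2^{n-1},2^n)$ for $n\ge1$. For $E\subset\mathbb R^+$, $\rho\ge0$ and $n\ge1$, let $$\nu^n_\rho(E)=\inf\Big\{\sum_{i=1}^m\Big(\frac{|Q_i|}{2^n}\Big)^\rho: Q_i\subset\mathcal S_n \text{ non-trivial intervals with integer endpoints},\ E\cap\mathcal S_n\subset\bigcup_{i=1}^m Q_i\Big\},$$ the infimum being over finite families. The macroscopic Hausdorff dimension is $\mathrm{Dim}_\mathrm{H}E=\inf\{\rho\ge0:\sum_{n\ge1}\nu^n_\rho(E)<\infty\}$. *)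

(* Defs.v *)
From HB Require Import structures.
From mathcomp Require Import all_boot all_order all_algebra.
From mathcomp Require Import all_classical all_reals all_analysis.
Set Implicit Arguments. Unset Strict Implicit. Unset Printing Implicit Defensive.
Import Order.TTheory GRing.Theory Num.Theory.
Local Open Scope classical_set_scope.
Local Open Scope ring_scope.

Definition Sn {R : realType} (n : nat) : set R :=
  [set x : R | (2 ^+ n.-1 <= x) /\ (x < 2 ^+ n)].

(* Q is a (non-trivial) interval with integer endpoints a < b (open, closed
   or half-open): it lies between the open and the closed interval. *)
Definition int_interval {R : realType} (Q : set R) (a b : int) : Prop :=
  (a < b)%R /\ `]a%:~R, b%:~R[%classic `<=` Q /\ Q `<=` `[a%:~R, b%:~R]%classic.

(* Generic covering quantity: infimum over finite families (Q_i)_{i<m} of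
   intervals with integer endpoints a_i < b_i, Q_i ⊂ S_n, whose length
   b_i - a_i satisfies the admissibility condition [adm n (b_i - a_i)],
   covering E ∩ S_n, of sum_i ((b_i - a_i)/2^n)^rho. inf of ∅ is +oo. *)
Definition nu_gen {R : realType} (adm : nat -> int -> Prop)
    (n : nat) (rho : R) (E : set R) : \bar R :=
  ereal_inf [set v | exists (m : nat) (Q : 'I_m -> set R) (a b : 'I_m -> int),
    (forall i, int_interval (Q i) (a i) (b i) /\ Q i `<=` Sn n /\ adm n (b i - a i))
    /\ E `&` Sn n `<=` \bigcup_(i in [set: 'I_m]) Q i
    /\ v = ((\sum_(i < m) powR (((b i - a i)%:~R : R) / 2 ^+ n) rho)%:E)].

Definition nu {R : realType} (n : nat) (rho : R) (E : set R) : \bar R :=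
  nu_gen (fun _ _ => True) n rho E.

Definition nu_tilde {R : realType} (n : nat) (rho : R) (E : set R) : \bar R :=
  nu_gen (fun n L => exists k : nat, (0 < k)%N /\ L = ((k * n ^ 2)%N)%:Z) n rho E.

Definition DimH {R : realType} (E : set R) : \bar R :=
  ereal_inf [set r%:E | r in [set r : R | 0 <= r /\
     (\sum_(1 <= n <oo) nu n r E < +oo)%E]].

(* Main.v *)
Set Warnings "-all".
Require Import Defs.
From HB Require Import structures.
From mathcomp Require Import all_boot all_order all_algebra.
From mathcomp Require Import all_classical all_reals all_analysis.
From mathcomp Require Import zify ring lra.
Import Order.TTheory GRing.Theory Num.Theory.
Local Open Scope classical_set_scope.
Local Open Scope ring_scope.
Section S.
Set Implicit Arguments.
Variable R : realType.

Lemma Sn_int (n : nat) (x : R) : Sn n x <-> ((2 ^ n.-1)%N%:Z%:~R <= x /\ x < (2 ^ n)%N%:Z%:~R).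
Proof.
have -> : ((2 ^ n.-1)%N%:Z%:~R : R) = 2 ^+ n.-1 by rewrite -[LHS]/((2 ^ n.-1)%N%:R) natrX.
have -> : ((2 ^ n)%N%:Z%:~R : R) = 2 ^+ n by rewrite -[LHS]/((2 ^ n)%N%:R) natrX.
by [].
Qed.

Lemma int_bounds (n : nat) (Q : set R) (a b : int) :
  int_interval Q a b -> Q `<=` Sn n ->
  ((2 ^ n.-1)%N%:Z <= a /\ b <= (2 ^ n)%N%:Z)%R.
Proof.
move=> [ab [oQ Qc]] QS.
have mid x : (a%:~R : R) < x -> x < b%:~R -> ((2 ^ n.-1)%N%:Z%:~R <= x /\ x < (2 ^ n)%N%:Z%:~R).
  by move=> h1 h2; apply/Sn_int/QS/oQ; rewrite /= in_itv /= h1 h2.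
have ab1 : (a + 1 <= b)%R by lia.
split.
  rewrite leNgt; apply/negP => h.
  have h' : (a + 1 <= (2 ^ n.-1)%N%:Z)%R by lia.
  have := mid (a%:~R + 2^-1).
  have : ((a + 1)%:~R : R) <= b%:~R by rewrite ler_int.
  have : ((a + 1)%:~R : R) <= (2 ^ n.-1)%N%:Z%:~R by rewrite ler_int.
  rewrite intrD /= => h1 h2 [] ; lra.
rewrite leNgt; apply/negP => h.
have h' : ((2 ^ n)%N%:Z + 1 <= b)%R by lia.
have := mid (b%:~R - 2^-1).
have : ((a + 1)%:~R : R) <= b%:~R by rewrite ler_int.
have : (((2 ^ n)%N%:Z + 1)%:~R : R) <= b%:~R by rewrite ler_int.
rewrite !intrD /= => h1 h2 [] ; lra.
Qed.

Definition admT (n : nat) (L : int) : Prop :=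
  exists k : nat, (0 < k)%N /\ L = ((k * n ^ 2)%N)%:Z.

Definition cI (c d : int) : set R := [set x : R | c%:~R <= x <= d%:~R].

Lemma interval_cap (Q : set R) (a b c d : int) :
  int_interval Q a b -> (a <= c)%R -> (c < d)%R -> (d <= b)%R ->
  int_interval (Q `&` cI c d) c d.
Proof.
move=> [ab [oQ Qc]] ac cd db; split => //; split.
- move=> x; rewrite /= in_itv /= => /andP[h1 h2].
  have : (a%:~R : R) <= c%:~R by rewrite ler_int.
  have : (d%:~R : R) <= b%:~R by rewrite ler_int.
  move=> h3 h4; split; last by rewrite /cI /= !ltW.
  by apply: oQ; rewrite /= in_itv /=; apply/andP; split; lra.
- by move=> x [_]; rewrite /cI /= in_itv /=.
Qed.

Lemma Sn_interval (n : nat) : (1 <= n)%N ->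
  int_interval (Sn n : set R) (2 ^ n.-1)%N%:Z (2 ^ n)%N%:Z.
Proof.
move=> n1; split.
  rewrite ltz_nat; case: n n1 => // n _ /=; rewrite expnS; have := expn_gt0 2 n; lia.
split.
- by move=> x; rewrite /= in_itv /= => /andP[h1 h2]; apply/Sn_int; split => //; rewrite ltW.
- by move=> x /Sn_int [h1 h2]; rewrite /= in_itv /= h1 ltW.
Qed.

Lemma cost_big (rho rho' x y : R) : 0 <= rho -> rho <= rho' ->
  0 <= x -> x <= y -> 0 < y -> y <= 1 -> powR x rho' <= powR y rho.
Proof.
move=> r0 rr x0 xy y0 y1.
apply: (@le_trans _ _ (powR y rho')).
  apply: ge0_ler_powR; rewrite ?nnegrE; lra.
by apply: ger_powR => //; rewrite y0 y1.
Qed.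

Lemma ir_le {u v : int} : (u <= v)%R -> (u%:~R : R) <= v%:~R.
Proof. by rewrite ler_int. Qed.

Lemma core (n : nat) (rho rho' : R) (Q : set R) (a b : int) :
  (1 <= n)%N -> (2 * n ^ 2 <= 2 ^ n)%N ->
  powR ((n ^ 2)%N%:R / 2 ^+ n) rho' <= powR (2 ^+ n)^-1 rho ->
  0 <= rho -> rho <= rho' ->
  int_interval Q a b -> Q `<=` Sn n ->
  exists (Q1 Q2 : set R) (a1 b1 a2 b2 : int),
   [/\ int_interval Q1 a1 b1 /\ Q1 `<=` Sn n /\ admT n (b1 - a1),
       int_interval Q2 a2 b2 /\ Q2 `<=` Sn n /\ admT n (b2 - a2),
       Q `<=` Q1 `|` Q2,
       powR ((b1 - a1)%:~R / 2 ^+ n) rho' <= powR ((b - a)%:~R / 2 ^+ n) rho &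
       powR ((b2 - a2)%:~R / 2 ^+ n) rho' <= powR ((b - a)%:~R / 2 ^+ n) rho].
Proof.
move=> n1 hA hB r0 rr hQ QS.
have [hNa hbM] := int_bounds hQ QS.
have [ab [_ Qc]] := hQ.
have QI x : Q x -> (a%:~R : R) <= x /\ x <= b%:~R.
  by move=> /Qc; rewrite /= in_itv /= => /andP[].
set Na := (2 ^ n.-1)%N in hNa *. set M := (2 ^ n)%N in hbM *.
have MNa : M = (2 * Na)%N by rewrite /M /Na; case: (n) n1 => // k _; rewrite expnS.
have hM : (2 ^+ n : R) = M%:Z%:~R by rewrite -[RHS]/(M%:R) natrX.
set K := (n ^ 2)%N in hA hB *.
have K1 : (1 <= K)%N by rewrite /K expn_gt0 n1.
have KNa : (K <= Na)%N by lia.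
have [Ln hLn] : exists Ln : nat, b - a = Ln%:Z by exists `|b - a|%N; lia.
have M0 : (0 : R) < 2 ^+ n by rewrite exprn_gt0.
have y0 : (0 : R) < (b - a)%:~R / 2 ^+ n.
  by rewrite divr_gt0 // ltr0z; lia.
have y1 : (b - a)%:~R / 2 ^+ n <= (1 : R).
  rewrite ler_pdivrMr // mul1r hM ler_int; lia.
case: (ltnP Ln K) => hLK.
- have [a1 [h1 h2 h3 h4]] : exists a1 : int,
      [/\ (Na%:Z <= a1)%R, (a1 <= a)%R, (a1 + K%:Z <= M%:Z)%R & (b <= a1 + K%:Z)%R].
    by case: (lerP a (M%:Z - K%:Z)) => h; [exists a | exists (M%:Z - K%:Z)]; split; lia.
  pose Q1 := (Sn n : set R) `&` cI a1 (a1 + K%:Z).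
  have hI : int_interval Q1 a1 (a1 + K%:Z).
    rewrite /Q1; apply: (@interval_cap (Sn n) _ _ a1 (a1 + K%:Z) (@Sn_interval n n1)); rewrite -/Na -/M; lia.
  have hS : Q1 `<=` Sn n by move=> x [].
  have hadm : admT n (a1 + K%:Z - a1) by exists 1%N; split => //; lia.
  have hcov : Q `<=` Q1 `|` Q1.
    move=> x Qx; left; split; first exact: QS.
    have [e1 e2] := QI x Qx.
    have := ir_le h2; have := ir_le h4; rewrite /cI /= intrD => f1 f2.
    apply/andP; split; lra.
  have hcost : powR ((a1 + K%:Z - a1)%:~R / 2 ^+ n) rho' <= powR ((b - a)%:~R / 2 ^+ n) rho.
    rewrite (_ : a1 + K%:Z - a1 = K%:Z); last by lia.
    apply: le_trans hB _.
    have hh : (2 ^+ n)^-1 <= (b - a)%:~R / (2 ^+ n : R).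
      rewrite -[X in X <= _]mul1r ler_pM2r ?invr_gt0 //.
      have hb : (1 <= b - a)%R by lia.
      exact: (ir_le hb).
    apply: ge0_ler_powR => //; rewrite ?nnegrE ?invr_ge0; exact: ltW.
  by exists Q1, Q1, a1, (a1 + K%:Z), a1, (a1 + K%:Z); split.
- set q := (Ln %/ K)%N.
  have q1 : (0 < q)%N by rewrite divn_gt0.
  have e1 : (q * K <= Ln)%N by apply: leq_trunc_div.
  have e2 : (Ln < q.+1 * K)%N by apply: ltn_ceil.
  have e3 : (K <= q * K)%N by rewrite leq_pmull.
  rewrite mulSn in e2.
  set L1 := (q * K)%N in e1 e2 e3.
  pose Q1 := Q `&` cI a (a + L1%:Z).
  pose Q2 := Q `&` cI (b - L1%:Z) b.
  have hI1 : int_interval Q1 a (a + L1%:Z) by rewrite /Q1; apply: (@interval_cap Q a b a (a + L1%:Z) hQ); lia.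
  have hI2 : int_interval Q2 (b - L1%:Z) b by rewrite /Q2; apply: (@interval_cap Q a b (b - L1%:Z) b hQ); lia.
  have hS1 : Q1 `<=` Sn n by move=> x [/QS].
  have hS2 : Q2 `<=` Sn n by move=> x [/QS].
  have hadm1 : admT n (a + L1%:Z - a) by exists q; split => //; lia.
  have hadm2 : admT n (b - (b - L1%:Z)) by exists q; split => //; lia.
  have hcov : Q `<=` Q1 `|` Q2.
    move=> x Qx; have [f1 f2] := QI x Qx.
    have g1 : (b - L1%:Z <= a + L1%:Z)%R by lia.
    have := ir_le g1; rewrite !intrD !intrN => g2.
    case: (lerP x (a + L1%:Z)%:~R) => hx.
      by left; split => //; rewrite /cI /=; apply/andP; split.
    by right; split => //; rewrite /cI /= intrD intrN; apply/andP; split; [rewrite intrD in hx; lra|].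
  have cst (L : int) : (0 <= L <= b - a)%R ->
      powR (L%:~R / 2 ^+ n) rho' <= powR ((b - a)%:~R / 2 ^+ n) rho.
    move=> /andP[l0 l1]; apply: cost_big => //.
    + apply: divr_ge0; [by rewrite ler0z | exact: ltW].
    + by rewrite ler_pM2r ?invr_gt0 // ler_int.
  exists Q1, Q2, a, (a + L1%:Z), (b - L1%:Z), b; split => //.
  + by apply: cst; apply/andP; split; lia.
  + by apply: cst; apply/andP; split; lia.
Qed.

Local Open Scope ereal_scope.

Lemma assemble (n : nat) (rho rho' : R) (E : set R) :
  (1 <= n)%N -> (2 * n ^ 2 <= 2 ^ n)%N ->
  (powR ((n ^ 2)%N%:R / 2 ^+ n) rho' <= powR (2 ^+ n)^-1 rho)%R ->
  (0 <= rho)%R -> (rho <= rho')%R ->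
  nu_tilde n rho' E <= 2%:E * nu n rho E.
Proof.
move=> n1 hA hB r0 rr.
rewrite /nu_tilde /nu /nu_gen -ereal_inf_pZl //.
apply: le_ereal_inf_tmp => _ [_ [m [Q [a [b [hQ [hcov ->]]]]]] <-].
pose good (i : 'I_m) (t : set R * int * int) :=
  int_interval t.1.1 t.1.2 t.2 /\ t.1.1 `<=` Sn n /\ admT n (t.2 - t.1.2) /\
  (powR ((t.2 - t.1.2)%:~R / 2 ^+ n) rho' <= powR ((b i - a i)%:~R / 2 ^+ n) rho)%R.
have hc : forall i : 'I_m, exists p : (set R * int * int) * (set R * int * int),
    [/\ good i p.1, good i p.2 & Q i `<=` p.1.1.1 `|` p.2.1.1].
  move=> i; have [hI [hS _]] := hQ i.
  have [Q1 [Q2 [a1 [b1 [a2 [b2 [[h1 [h2 h3]] [h4 [h5 h6]] h7 h8 h9]]]]]]] :=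
    @core n rho rho' (Q i) (a i) (b i) n1 hA hB r0 rr hI hS.
  by exists ((Q1, a1, b1), (Q2, a2, b2)); split => //; split.
have [f hf] := choice hc.
pose g (j : 'I_(m + m)) : set R * int * int :=
  match fintype.split j with inl i => (f i).1 | inr i => (f i).2 end.
pose ix (j : 'I_(m + m)) : 'I_m := match fintype.split j with inl i => i | inr i => i end.
have gg j : good (ix j) (g j).
  by rewrite /g /ix; case: (fintype.split j) => i; have [? ? ?] := hf i.
apply: ge_ereal_inf.
exists ((\sum_(j < m + m) powR (((g j).2 - (g j).1.2)%:~R / 2 ^+ n) rho')%:E).
  exists (m + m)%N, (fun j => (g j).1.1), (fun j => (g j).1.2), (fun j => (g j).2).
  split.
    by move=> j; have [h1 [h2 [h3 _]]] := gg j.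
  split => //.
  move=> x Ex; have [i _ Qix] := hcov x Ex.
  have [_ _ h] := hf i.
  case: (h x Qix) => hx.
    exists (lshift m i) => //.
    by rewrite /g (_ : fintype.split (lshift m i) = inl i) //; exact: (unsplitK (inl i)).
  exists (rshift m i) => //.
  by rewrite /g (_ : fintype.split (rshift m i) = inr i) //; exact: (unsplitK (inr i)).
rewrite -EFinM lee_fin big_split_ord /= mulr2n mulrDl mul1r.
apply: lerD; apply: ler_sum => i _.
  have := gg (lshift m i); rewrite /ix (_ : fintype.split (lshift m i) = inl i); last exact: (unsplitK (inl i)).
  by move=> [_ [_ [_ ->]]].
have := gg (rshift m i); rewrite /ix (_ : fintype.split (rshift m i) = inr i); last exact: (unsplitK (inr i)).
by move=> [_ [_ [_ ->]]].
Qed.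

End S.
Section G.
Variable R : realType.

Lemma ln_le_sqrt (x : R) : 0 < x -> ln x <= 2 * Num.sqrt x.
Proof.
move=> x0; have s0 : 0 < Num.sqrt x by rewrite sqrtr_gt0.
rewrite -{1}(sqr_sqrtr (ltW x0)) lnXn // mulr2n.
have := ln_sublinear s0; lra.
Qed.

Lemma growth (c d : R) : 0 <= c ->
  exists N0 : nat, forall n : nat, (N0 <= n)%N -> c * ln (n%:R : R) + d <= n%:R.
Proof.
move=> c0; set T := 2 * c + `|d| + 1.
exists (((Num.trunc T).+1) ^ 2)%N => n hn.
have T1 : 1 <= T by rewrite /T; have := normr_ge0 d; lra.
have hTk := truncnS_gt T.
set k := (Num.trunc T).+1 in hn hTk.
have n0 : (0 < n)%N by apply: leq_trans hn; rewrite expn_gt0.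
have n0r : (0 : R) < n%:R by rewrite ltr0n.
set s := Num.sqrt (n%:R : R).
have s0 : 0 <= s by rewrite sqrtr_ge0.
have ss : s ^+ 2 = n%:R by rewrite sqr_sqrtr // ltW.
have sk : k%:R <= s.
  rewrite -(@ger0_norm _ (k%:R : R)) // -sqrtr_sqr.
  by apply: ler_wsqrtr; rewrite -natrX ler_nat.
have hl := ln_le_sqrt (n%:R) n0r.
have hc : c * ln (n%:R : R) <= c * (2 * s) by rewrite ler_wpM2l.
have hd := ler_norm d.
have dn := normr_ge0 d.
rewrite -[X in _ <= X]ss.
have sT : T <= s by lra.
have h1 : 0 <= (s - T) * s by rewrite mulr_ge0 //; lra.
have h2 : 0 <= (s - 1) * `|d| by rewrite mulr_ge0 //; lra.
rewrite /T in sT h1; rewrite expr2; nra.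
Qed.

Lemma eventually (rho rho' : R) : 0 <= rho -> rho < rho' ->
  exists N0 : nat, (1 <= N0)%N /\ forall n : nat, (N0 <= n)%N ->
   (2 * n ^ 2 <= 2 ^ n)%N /\
   powR ((n ^ 2)%N%:R / 2 ^+ n) rho' <= powR (2 ^+ n)^-1 rho.
Proof.
move=> r0 rr.
have l2 : (0 : R) < ln 2 by apply: ln_gt0; rewrite ltr1n.
have c1 : 0 <= 2 / ln (2 : R) by rewrite divr_ge0 // ltW.
have [N1 h1] := growth (2 / ln 2) 1 c1.
have c2 : 0 <= 2 * rho' / ((rho' - rho) * ln 2).
  by rewrite divr_ge0 // ?mulr_ge0 // ltW //; lra.
have [N2 h2] := growth _ 0 c2.
exists (maxn (maxn N1 N2) 1); split; first by rewrite leq_maxr.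
move=> n hn.
have n1 : (N1 <= n)%N by apply: leq_trans hn; rewrite !leq_max leqnn.
have n2 : (N2 <= n)%N by apply: leq_trans hn; rewrite !leq_max leqnn orbT.
have n0 : (0 < n)%N by apply: leq_trans hn; rewrite !leq_max leqnn orbT.
have nr : (0 : R) < n%:R by rewrite ltr0n.
have l2n : ln (2 : R) != 0 by rewrite gt_eqF.
have e2n : ln ((2 : R) ^+ n) = n%:R * ln 2 by rewrite lnXn // mulr_natl.
split.
  have H := h1 n n1.
  have H' : 2 * ln (n%:R : R) + ln 2 <= n%:R * ln 2.
    have := ler_wpM2r (ltW l2) H.
    have E : (2 / ln (2:R) * ln (n%:R:R) + 1) * ln 2 = 2 * ln (n%:R : R) + ln 2.
      by field.
    by rewrite E.
  rewrite -(ler_nat R) -(ler_ln) ?posrE ?ltr0n ?expn_gt0 //.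
  rewrite natrM natrX lnM ?posrE ?exprn_gt0 ?ltr0n // lnXn // natrX e2n.
  rewrite mulr2n; lra.
  by rewrite muln_gt0 expn_gt0 n0.
have H2 := h2 n n2.
have H' : 2 * rho' * ln (n%:R : R) <= (rho' - rho) * (n%:R * ln 2).
  have rr0 : 0 < (rho' - rho) * ln 2 by rewrite mulr_gt0 //; lra.
  have := ler_wpM2r (ltW rr0) H2.
  have rn : rho' - rho != 0 by rewrite gt_eqF // subr_gt0.
  have Dn : (rho' - rho) * ln (2:R) != 0 by rewrite mulf_neq0.
  by rewrite addr0 mulrAC divfK // mulrCA.
have p1 : ((n ^ 2)%N%:R / 2 ^+ n : R) != 0 by rewrite gt_eqF // divr_gt0 ?exprn_gt0 // ltr0n expn_gt0 n0.
have p2 : ((2 ^+ n)^-1 : R) != 0 by rewrite gt_eqF // invr_gt0 exprn_gt0.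
rewrite /powR (negbTE p1) (negbTE p2) ler_expR.
rewrite lnV ?posrE ?exprn_gt0 //. rewrite ln_div ?posrE ?ltr0n ?expn_gt0 ?exprn_gt0 ?n0 //.
rewrite natrX lnXn // e2n.
nra.
Qed.
End G.

Section M.
Variable R : realType.
Lemma nu_le1 n (rho : R) E : (1 <= n)%N -> 0 <= rho -> (nu n rho E <= 1)%E.
Proof.
move=> n1 r0.
apply: ge_ereal_inf.
exists ((\sum_(i < 1) powR ((((fun _ : 'I_1 => (2 ^ n)%N%:Z) i - (fun _ : 'I_1 => (2 ^ n.-1)%N%:Z) i)%:~R : R) / 2 ^+ n) rho)%:E).
  exists 1%N, (fun _ => Sn n), (fun _ => (2 ^ n.-1)%N%:Z), (fun _ => (2 ^ n)%N%:Z).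
  split; first by move=> i; split; [exact: Sn_interval | split].
  split => //.
  by move=> x [_ Sx]; exists ord0.
rewrite big_ord1 lee_fin.
have hM : (2 ^+ n : R) = (2 ^ n)%N%:Z%:~R by rewrite -[RHS]/((2 ^ n)%N%:R) natrX.
have M0 : (0 : R) < 2 ^+ n by rewrite exprn_gt0.
have hle : ((((2 ^ n)%N%:Z - (2 ^ n.-1)%N%:Z)%:~R : R) <= 2 ^+ n).
  rewrite hM ler_int; lia.
have hge : (0 : R) <= ((2 ^ n)%N%:Z - (2 ^ n.-1)%N%:Z)%:~R.
  rewrite ler0z subr_ge0 lez_nat leq_pexp2l //; lia.
apply: (@le_trans _ _ (powR 1 rho)); last by rewrite powR1.
apply: ge0_ler_powR => //; rewrite ?nnegrE //.
- by rewrite divr_ge0 // ltW.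
- by rewrite ler_pdivrMr // mul1r.
Qed.


Local Open Scope ereal_scope.

Lemma nu_gen_ge0 adm n (rho : R) E : 0 <= nu_gen adm n rho E.
Proof.
apply: le_ereal_inf_tmp => _ [m [Q [a [b [_ [_ ->]]]]]].
by rewrite lee_fin sumr_ge0 // => i _; exact: powR_ge0.
Qed.

Lemma nu_le_tilde n (rho : R) E : nu n rho E <= nu_tilde n rho E.
Proof.
apply: ereal_inf_le_tmp => _ [m [Q [a [b [h [hc ->]]]]]].
exists m, Q, a, b; split => //.
by move=> i; have [h1 [h2 _]] := h i.
Qed.

End M.

Theorem lemma2 (R : realType) (E : set R) (hE : E `<=` [set x : R | 0 <= x]) :
  DimH E = ereal_inf [set r%:E | r in [set r : R | 0 <= r /\
     exists N : nat, (1 <= N)%N /\ (\sum_(N <= n <oo) nu_tilde n r E < +oo)%E]].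
Proof.
rewrite /DimH; apply/eqP; rewrite eq_le; apply/andP; split.
- apply: ereal_inf_le_tmp => _ [r [r0 [N [N1 hN]]] <-].
  exists r => //; split => //.
  rewrite (@nneseries_split _ _ 1 N.-1); last by move=> k _; exact: nu_gen_ge0.
  rewrite add1n prednK //.
  apply: lte_add_pinfty.
    rewrite big_nat_cond; apply: lte_sum_pinfty => i /andP[/andP[i1 _] _].
    exact: (le_lt_trans (@nu_le1 R i r E i1 r0) (ltry 1)).
  apply: le_lt_trans hN.
  apply: lee_nneseries => [i _ _|i _]; [exact: nu_gen_ge0 | exact: nu_le_tilde].
- apply: le_ereal_inf_tmp => _ [r [r0 hr] <-].
  apply/lee_addgt0Pr => e e0.
  have re : r < r + e by rewrite ltrDl.
  have [N0 [N01 hN0]] := @eventually R r (r + e) r0 re.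
  apply: ge_ereal_inf; exists (r + e)%:E; last by rewrite EFinD.
  exists (r + e) => //; split; first by rewrite addr_ge0 // ltW.
  exists N0; split => //.
  apply: (@le_lt_trans _ _ (\sum_(N0 <= n <oo) (2%:E * nu n r E))%E).
    rewrite [X in (X <= _)%E]eseries_cond [X in (_ <= X)%E]eseries_cond.
    apply: lee_nneseries => [i _ _| i /andP[_ hi]]; first exact: nu_gen_ge0.
    have [hA hB] := hN0 i hi.
    exact: (@assemble R i r (r + e) E (leq_trans N01 hi) hA hB r0 (ltW re)).
  rewrite nneseriesZl; last by move=> i _; exact: nu_gen_ge0.
  apply: lte_mul_pinfty => //.
  apply: le_lt_trans hr.
  rewrite [X in (X <= _)%E]eseries_cond [X in (_ <= X)%E]eseries_cond.
  apply: subset_lee_nneseries => [i _|i /andP[_ hi]]; first exact: nu_gen_ge0.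
  by rewrite /= (leq_trans N01 hi).
Qed.
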